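(* Let $\mathbb{F}$ be a field, $H$ a finite additive subgroup of $\mathbb{F}$, and $m,d$ positive integers with $d<|H|$. For every $\vec v\in\mathbb{F}^m$ and every polynomial $P\in\mathbb{F}[X_1,\dots,X_m]$ of individual degree at most $d$, $$\sum_{\vec\alpha\in H^m}P(\vec\alpha+\vec v)=\kappa\cdot a_0^m,$$ where $\kappa$ is the coefficient of $X_1^{|H|-1}\cdots X_m^{|H|-1}$ in $P$ and $a_0$ is the coefficient of the linear term $X$ in the polynomial $\prod_{h\in H}(X-h)$. In particular, if $P$ has total degree strictly less than $m(|H|-1)$, the sum equals $0$. *)

(* Defs.v *)
From HB Require Import structures.
From mathcomp Require Import all_boot all_order all_algebra.
Set Implicit Arguments. Unset Strict Implicit. Unset Printing Implicit Defensive.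
Import Order.TTheory GRing.Theory Num.Theory.
Local Open Scope ring_scope.

(* A polynomial in F[X_1,...,X_m] of individual degree at most d is given by
   its coefficient array: for every exponent vector e : 'I_m -> {0..d},
   the coefficient c e of the monomial prod_i X_i^(e i). *)
Definition mpolyd (F : fieldType) (m d : nat) :=
  {ffun {ffun 'I_m -> 'I_d.+1} -> F}.

Definition meval (F : fieldType) (m d : nat) (P : mpolyd F m d) (x : 'I_m -> F) : F :=
  \sum_(e : {ffun 'I_m -> 'I_d.+1}) P e * \prod_(i < m) x i ^+ e i.

(* Coefficient of the monomial prod_i X_i^(n i) (n : exponent vector in nat);
   it is 0 when some n i exceeds d. *)
Definition mcoef (F : fieldType) (m d : nat) (P : mpolyd F m d) (n : 'I_m -> nat) : F :=
  \sum_(e : {ffun 'I_m -> 'I_d.+1} | [forall i, (e i : nat) == n i]) P e.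

Definition mtotdeg_lt (F : fieldType) (m d : nat) (P : mpolyd F m d) (k : nat) : Prop :=
  forall e : {ffun 'I_m -> 'I_d.+1}, P e != 0 -> (\sum_(i < m) (e i : nat) < k)%N.

Definition fin_add_subgroup (F : fieldType) (H : seq F) : Prop :=
  [/\ uniq H, 0 \in H & forall x y, x \in H -> y \in H -> x - y \in H].

(* Main.v *)
Require Import Defs.
From HB Require Import structures.
From mathcomp Require Import all_boot all_order all_algebra.
From mathcomp Require Import zify.
Import Order.TTheory GRing.Theory Num.Theory.
Local Open Scope ring_scope.

Section Aux.
Variables (F : fieldType) (H : seq F).
Hypothesis hH : fin_add_subgroup H.

Lemma uH : uniq H. Proof. by case: hH. Qed.
Lemma H0 : 0 \in H. Proof. by case: hH. Qed.
Lemma HB x y : x \in H -> y \in H -> x - y \in H. Proof. by case: hH => _ _; apply. Qed.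
Lemma HD x y : x \in H -> y \in H -> x + y \in H.
Proof.
move=> xH yH; have ny : - y \in H by rewrite -sub0r; apply: HB => //; exact: H0.
by rewrite -[y]opprK; apply: HB.
Qed.

Definition Dc := \prod_(c <- rem 0 H) (- c).

Lemma perm_shift h : h \in H -> perm_eq (rem h H) (map (fun c => h + c) (rem 0 H)).
Proof.
move=> hH'; apply: uniq_perm.
- exact: rem_uniq uH.
- rewrite map_inj_uniq; [exact: rem_uniq uH | exact: addrI].
move=> x; rewrite (mem_rem_uniq _ uH) inE.
apply/andP/mapP.
- case=> xh xH; exists (x - h); last by rewrite addrC subrK.
  rewrite (mem_rem_uniq _ uH) inE subr_eq0 xh /=; exact: HB.
- case=> c; rewrite (mem_rem_uniq _ uH) inE => /andP [c0 cH] ->.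
  split; last exact: HD.
  by rewrite -subr_eq0 addrAC subrr add0r.
Qed.

Lemma a0E : (\prod_(h <- H) ('X - h%:P))`_1 = Dc.
Proof.
rewrite (big_rem 0) /=; last exact: H0.
rewrite subr0 coefXM /= -horner_coef0 horner_prod /Dc.
by apply: eq_bigr => c _; rewrite hornerXsubC sub0r.
Qed.

Lemma L_at h : h \in H -> (\prod_(h' <- rem h H) ('X - h'%:P)).[h] = Dc.
Proof.
move=> hH'; rewrite horner_prod (perm_big _ (perm_shift _ hH')) big_map /Dc.
by apply: eq_bigr => c _; rewrite hornerXsubC opprD addrA subrr sub0r.
Qed.

Lemma Dc_neq0 : Dc != 0.
Proof.
rewrite /Dc big_seq; apply: (big_ind (fun x => x != 0)) => //.
- exact: oner_neq0.
- by move=> x y; apply: mulf_neq0.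
move=> c; rewrite (mem_rem_uniq _ uH) inE => /andP [c0 _]; by rewrite oppr_eq0.
Qed.

Lemma sizeH : (0 < size H)%N.
Proof. by case: H H0. Qed.

Lemma lagrange (g : {poly F}) : (size g <= size H)%N ->
  \sum_(h <- H) g.[h] = Dc * g`_(size H).-1.
Proof.
move=> sg.
pose L h := \prod_(h' <- rem h H) ('X - h'%:P).
have sL h : h \in H -> size (L h) = size H.
  by move=> hH'; rewrite size_prod_XsubC size_rem // prednK // sizeH.
have eqg : g = \sum_(h <- H) (g.[h] / Dc) *: L h.
  apply/eqP; rewrite -subr_eq0; apply/negPn/negP => nz.
  have := max_poly_roots nz _ uH.
  have -> : all (root (g - \sum_(h <- H) (g.[h] / Dc) *: L h)) H.
    apply/allP => x xH; rewrite rootE hornerD hornerN horner_sum.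
    rewrite (bigD1_seq x) ?uH //= hornerZ L_at // divfK ?Dc_neq0 //.
    rewrite big1_seq ?addr0 ?subrr // => h /andP [hx hH'].
    apply/eqP; rewrite hornerZ mulf_eq0; apply/orP; right.
    rewrite -/(root _ x) root_prod_XsubC (mem_rem_uniq _ uH) inE xH andbT.
    by rewrite eq_sym.
  move=> /(_ isT); apply/negP; rewrite -leqNgt.
  apply: leq_trans (size_polyD _ _) _; rewrite geq_max sg size_polyN.
  rewrite big_seq; apply: (big_ind (fun p : {poly F} => size p <= size H)%N).
  - by rewrite size_poly0.
  - move=> p q hp hq; apply: leq_trans (size_polyD _ _) _; by rewrite geq_max hp hq.
  - by move=> h hH'; apply: leq_trans (size_scale_leq _ _) _; rewrite sL.
rewrite {2}eqg coef_sum mulr_sumr; apply: eq_big_seq => h hH'.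
rewrite coefZ -(sL h hH') -lead_coefE.
have /monicP -> : L h \is monic by apply: monic_prod_XsubC.
by rewrite mulr1 mulrC divfK ?Dc_neq0.
Qed.

Lemma T_eq (v : F) (k : nat) : (k <= (size H).-1)%N ->
  \sum_(h <- H) (h + v) ^+ k = if k == (size H).-1 then Dc else 0.
Proof.
move=> hk.
have sg : (size (('X - (- v)%:P) ^+ k) <= size H)%N.
  rewrite size_exp_XsubC; have := sizeH; lia.
have := lagrange _ sg.
under eq_bigr => h _ do rewrite horner_exp hornerXsubC opprK.
move=> ->; case: eqP => [ek | nk].
- have : ('X - (- v)%:P) ^+ k \is monic by apply: monic_exp; apply: monicXsubC.
  move/monicP; rewrite lead_coefE size_exp_XsubC /= ek => ->; by rewrite mulr1.
- rewrite nth_default ?mulr0 // size_exp_XsubC; lia.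
Qed.

End Aux.

Theorem lemmaC5 (F : fieldType) (H : seq F) (m d : nat)
  (hH : fin_add_subgroup H) (hm : (0 < m)%N) (hd : (0 < d)%N)
  (hdH : (d < size H)%N) (v : 'I_m -> F) (P : mpolyd F m d) :
  let a0 := (\prod_(h <- H) ('X - h%:P))`_1 in
  let kappa := mcoef P (fun _ => (size H).-1) in
  (\sum_(alpha : {ffun 'I_m -> 'I_(size H)})
      meval P (fun i => nth 0 H (alpha i) + v i) = kappa * a0 ^+ m)
  /\ (mtotdeg_lt P (m * (size H).-1) ->
      \sum_(alpha : {ffun 'I_m -> 'I_(size H)})
        meval P (fun i => nth 0 H (alpha i) + v i) = 0).
Proof.
move=> a0 kappa.
have ha0 : a0 = @Dc F H by rewrite /a0 (@a0E F H hH).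
have main : \sum_(alpha : {ffun 'I_m -> 'I_(size H)})
      meval P (fun i => nth 0 H (alpha i) + v i) = kappa * a0 ^+ m.
  rewrite /meval exchange_big /=.
  transitivity (\sum_(e : {ffun 'I_m -> 'I_d.+1})
     P e * (if [forall i, (e i : nat) == (size H).-1] then a0 ^+ m else 0)).
    apply: eq_bigr => e _; rewrite -mulr_sumr; congr (_ * _).
    transitivity (\prod_(i < m) \sum_(j < size H) (nth 0 H j + v i) ^+ e i).
      by rewrite bigA_distr_bigA.
    have hj i : \sum_(j < size H) (nth 0 H j + v i) ^+ e i
                = if (e i : nat) == (size H).-1 then a0 else 0.
      rewrite ha0 -(@T_eq F H hH (v i) (e i)); last by have := ltn_ord (e i); lia.
      by rewrite (big_nth 0) big_mkord.
    under eq_bigr => i _ do rewrite hj.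
    case: ifP => [/forallP all | /negbT].
    + under eq_bigr => i _ do rewrite all.
      by rewrite prodr_const card_ord.
    + rewrite negb_forall => /existsP [i ni].
      by rewrite (bigD1 i) //= (negbTE ni) mul0r.
  rewrite /kappa /mcoef mulr_suml [RHS]big_mkcond /=.
  apply: eq_bigr => e _; case: ifP => _; by rewrite ?mulr0 ?mul0r.
split => // hdeg.
rewrite main.
suff -> : kappa = 0 by rewrite mul0r.
rewrite /kappa /mcoef big1 // => e /forallP /= he.
apply/eqP/negPn/negP => /(hdeg e).
rewrite (eq_bigr (fun _ => (size H).-1)); last by move=> i _; apply/eqP.
rewrite sum_nat_const card_ord ltnn; done.
Qed.
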